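(* Suppose $\dim_{\mathbb{C}}N=n-m=4$, where $N=\mathrm{span}_{\mathbb{C}}\{I_{m+1},\dots,I_n\}$, and suppose that (1) $a_{m+1}=b_{m+1}=0$, and (2) $a_{m+2}=b_{m+2}=0$ or $a_{m+3}=b_{m+3}=0$. Then for every circle $C$ as described in the context, $\lambda:=\int_C\zeta^{-1}\,d\zeta=2\pi i$ (that is, $2\pi i$ times the unit of $\mathbb{A}_n^m$).
   Context: Fix natural numbers $m\le n$. $\mathbb{A}_n^m$ is a commutative associative algebra with unit over $\mathbb{C}$ with a basis $\{I_k\}_{k=1}^n$ satisfying: (1) for $r,s\in\{1,\dots,m\}$, $I_rI_s=0$ if $r\ne s$ and $I_rI_r=I_r$; (2) for $r,s\in\{m+1,\dots,n\}$, $I_rI_s=\sum_{k=\max\{r,s\}+1}^{n}\Upsilon^{s}_{r,k}I_k$ with constants $\Upsilon^s_{r,k}\in\mathbb{C}$; (3) for each $s\in\{m+1,\dots,n\}$ there is a unique $u_s\in\{1,\dots,m\}$ such that for $r\in\{1,\dots,m\}$, $I_rI_s=I_s$ if $r=u_s$ and $0$ otherwise. Unit $1=\sum_{u=1}^mI_u$; $\mathbb{A}_n^m=S\oplus_sN$ with $S=\mathrm{span}\{I_1,\dots,I_m\}$, $N=\mathrm{span}\{I_{m+1},\dots,I_n\}$. $f_u(\sum_k\lambda_kI_k)=\lambda_u$. Let $e_1=1$, $e_2=\sum_{k=1}^na_kI_k$, $e_3=\sum_{k=1}^nb_kI_k$ ($a_k,b_k\in\mathbb{C}$) be linearly independent over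 $\mathbb{R}$; $\zeta=xe_1+ye_2+ze_3$ ($x,y,z\in\mathbb{R}$), $E_3$ their real span. Standing assumption: $f_u(E_3)=\mathbb{C}$ for all $u=1,\dots,m$. $\zeta$ is non-invertible exactly when $(x,y,z)$ lies on one of the lines $L_u=\{x+y\,\mathrm{Re}\,a_u+z\,\mathrm{Re}\,b_u=0,\ y\,\mathrm{Im}\,a_u+z\,\mathrm{Im}\,b_u=0\}$. The circle: $C\subset E_3$ is $C=\{xe_1+ye_2+ze_3:(x,y,z)\in C'\}$ for a Euclidean circle $C'\subset\mathbb{R}^3$ of radius $R>0$ centered at the origin, such that for every $u$ the image $f_u(C)$ is a positively oriented closed Jordan curve in $\mathbb{C}$ bounding a domain containing $0$. Integral: for a Jordan rectifiable curve $\gamma$ and continuous $\Psi=\sum_k(U_k+iV_k)I_k$ on $\gamma_\zeta$, $\int_{\gamma_\zeta}\Psi d\zeta:=\sum_kI_k\int_\gamma(U_k+iV_k)dx+\sum_ke_2I_k\int_\gamma(U_k+iV_k)dy+\sum_ke_3I_k\int_\gamma(U_k+iV_k)dz$. *)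

(* Defs.v *)
From Stdlib Require Import Reals Arith Bool.
From Coquelicot Require Import Coquelicot.

(* Elements of the algebra A_n^m are represented by their coordinate
   vectors w.r.t. the basis I_1..I_n: k |-> coefficient of I_k.
   Only the coordinates k in {1,...,n} are meaningful. *)
Definition Elt := nat -> C.

Fixpoint csum_from (lo len : nat) (f : nat -> C) : C :=
  match len with
  | O => RtoC 0
  | S l => Cplus (f lo) (csum_from (S lo) l f)
  end.
Definition csum (lo hi : nat) (f : nat -> C) : C := csum_from lo (S hi - lo) f.

Definition inrange (lo hi k : nat) : bool := (lo <=? k) && (k <=? hi).

Definition basisI (k : nat) : Elt := fun j => if Nat.eqb j k then RtoC 1 else RtoC 0.

Definition eadd (x y : Elt) : Elt := fun j => Cplus (x j) (y j).
Definition escale (c : C) (x : Elt) : Elt := fun j => Cmult c (x j).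

Definition eqA (n : nat) (x y : Elt) : Prop :=
  forall j, (1 <= j <= n)%nat -> x j = y j.

(* Product of basis elements I_r I_s, r,s in {1..n}, per the multiplication
   table (1)-(3).  Ups r s k stands for the constant Upsilon^s_{r,k};
   us s stands for u_s. *)
Definition mulI (m n : nat) (Ups : nat -> nat -> nat -> C) (us : nat -> nat)
  (r s : nat) : Elt :=
  if (r <=? m) && (s <=? m) then
    (if Nat.eqb r s then basisI r else fun _ => RtoC 0)
  else if (r <=? m) then
    (if Nat.eqb r (us s) then basisI s else fun _ => RtoC 0)
  else if (s <=? m) then
    (if Nat.eqb s (us r) then basisI r else fun _ => RtoC 0)
  else
    (fun k => if inrange (S (Nat.max r s)) n k then Ups r s k else RtoC 0).

Definition emul (m n : nat) Ups us (x y : Elt) : Elt :=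
  fun j => csum 1 n (fun r => csum 1 n (fun s =>
             Cmult (Cmult (x r) (y s)) (mulI m n Ups us r s j))).

Definition is_algebra_Anm (m n : nat) (Ups : nat -> nat -> nat -> C)
  (us : nat -> nat) : Prop :=
  (1 <= m)%nat /\ (m <= n)%nat /\
  (forall s, (m + 1 <= s <= n)%nat -> (1 <= us s <= m)%nat) /\
  (forall r s, (1 <= r <= n)%nat -> (1 <= s <= n)%nat ->
     eqA n (mulI m n Ups us r s) (mulI m n Ups us s r)) /\
  (forall r s t, (1 <= r <= n)%nat -> (1 <= s <= n)%nat -> (1 <= t <= n)%nat ->
     eqA n (emul m n Ups us (emul m n Ups us (basisI r) (basisI s)) (basisI t))
           (emul m n Ups us (basisI r) (emul m n Ups us (basisI s) (basisI t)))).

Definition eone (m : nat) : Elt :=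
  fun j => if inrange 1 m j then RtoC 1 else RtoC 0.

(* zeta = x e_1 + y e_2 + z e_3, with e_1 = 1, e_2 = sum a_k I_k, e_3 = sum b_k I_k *)
Definition zeta (m : nat) (a b : Elt) (x y z : R) : Elt :=
  eadd (escale (RtoC x) (eone m)) (eadd (escale (RtoC y) a) (escale (RtoC z) b)).

Definition CInt (f : R -> C) (lo hi : R) : C :=
  (RInt (fun t => Re (f t)) lo hi, RInt (fun t => Im (f t)) lo hi).

Definition Cderiv (w : R -> C) (t : R) : C :=
  (Derive (fun s => Re (w s)) t, Derive (fun s => Im (w s)) t).

Definition winding0 (w : R -> C) : C :=
  Cdiv (CInt (fun t => Cdiv (Cderiv w t) (w t)) 0 (2 * PI))
       (Cmult (RtoC (2 * PI)) Ci).

(* the Euclidean circle of radius rad centred at 0 in R^3, in the plane spanned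
   by the orthonormal vectors (u1,u2,u3), (v1,v2,v3), oriented from u to v *)
Definition circ (rad c1 c2 t : R) : R := rad * (cos t * c1 + sin t * c2).

Definition orthonormal (u1 u2 u3 v1 v2 v3 : R) : Prop :=
  u1 * u1 + u2 * u2 + u3 * u3 = 1 /\ v1 * v1 + v2 * v2 + v3 * v3 = 1 /\
  u1 * v1 + u2 * v2 + u3 * v3 = 0.

(* The integral  int_{gamma_zeta} Psi dzeta  along the curve
   t |-> (gx t, gy t, gz t), t in [0, 2 pi], as in the definition:
   sum_k I_k int Psi_k dx + sum_k e2 I_k int Psi_k dy + sum_k e3 I_k int Psi_k dz,
   where int_gamma g dx = int_0^{2pi} g(gamma t) gx'(t) dt.
   Psi t is the value of Psi at the point zeta(gamma t). *)
Definition lineint (m n : nat) Ups us (a b : Elt) (gx gy gz : R -> R)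
  (Psi : R -> Elt) : Elt :=
  fun j => csum 1 n (fun k =>
    Cplus (Cmult (CInt (fun t => Cmult (Psi t k) (RtoC (Derive gx t))) 0 (2 * PI))
                 (basisI k j))
    (Cplus (Cmult (CInt (fun t => Cmult (Psi t k) (RtoC (Derive gy t))) 0 (2 * PI))
                  (emul m n Ups us a (basisI k) j))
           (Cmult (CInt (fun t => Cmult (Psi t k) (RtoC (Derive gz t))) 0 (2 * PI))
                  (emul m n Ups us b (basisI k) j)))).

(* Main.v *)
Require Import Defs.
From Stdlib Require Import Reals Arith Lia Lra.
From Coquelicot Require Import Coquelicot.

Lemma csum_from_ext lo len f g :
  (forall k, (lo <= k < lo + len)%nat -> f k = g k) ->
  csum_from lo len f = csum_from lo len g.
Proof.
  revert lo; induction len; intros lo H; simpl; auto.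
  rewrite H by lia. f_equal. apply IHlen. intros; apply H; lia.
Qed.

Lemma csum_from_zero lo len : csum_from lo len (fun _ => RtoC 0) = RtoC 0.
Proof. revert lo; induction len; intros; simpl; auto. rewrite IHlen. ring. Qed.

Lemma csum_from_plus lo len f g :
  csum_from lo len (fun k => Cplus (f k) (g k)) =
  Cplus (csum_from lo len f) (csum_from lo len g).
Proof. revert lo; induction len; intros; simpl. ring. rewrite IHlen. ring. Qed.

Lemma csum_from_scal lo len c f :
  csum_from lo len (fun k => Cmult c (f k)) = Cmult c (csum_from lo len f).
Proof. revert lo; induction len; intros; simpl. ring. rewrite IHlen. ring. Qed.

Lemma csum_from_delta lo len i f :
  (lo <= i < lo + len)%nat ->
  csum_from lo len (fun k => if Nat.eqb k i then f k else RtoC 0) = f i.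
Proof.
  revert lo; induction len; intros lo H; simpl. lia.
  destruct (Nat.eqb_spec lo i).
  - subst. rewrite (csum_from_ext _ _ _ (fun _ => RtoC 0)). rewrite csum_from_zero. ring.
    intros k Hk. destruct (Nat.eqb_spec k i); auto; lia.
  - rewrite IHlen by lia. ring.
Qed.

Lemma csum_from_swap lo1 len1 lo2 len2 (g : nat -> nat -> C) :
  csum_from lo1 len1 (fun r => csum_from lo2 len2 (fun s => g r s)) =
  csum_from lo2 len2 (fun s => csum_from lo1 len1 (fun r => g r s)).
Proof.
  revert lo1; induction len1; intros lo1; simpl.
  - rewrite csum_from_zero; auto.
  - rewrite IHlen1. rewrite csum_from_plus. auto.
Qed.

Lemma csum_from_app lo a b f :
  csum_from lo (a + b) f = Cplus (csum_from lo a f) (csum_from (lo + a) b f).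
Proof.
  revert lo; induction a; intros; simpl.
  - rewrite Nat.add_0_r. ring.
  - rewrite IHa. replace (S lo + a)%nat with (lo + S a)%nat by lia. ring.
Qed.

Lemma csum_ext lo hi f g :
  (forall k, (lo <= k <= hi)%nat -> f k = g k) -> csum lo hi f = csum lo hi g.
Proof. intros; unfold csum; apply csum_from_ext; intros; apply H; lia. Qed.

Lemma csum_zero lo hi : csum lo hi (fun _ => RtoC 0) = RtoC 0.
Proof. apply csum_from_zero. Qed.

Lemma csum_plus lo hi f g :
  csum lo hi (fun k => Cplus (f k) (g k)) = Cplus (csum lo hi f) (csum lo hi g).
Proof. apply csum_from_plus. Qed.

Lemma csum_scal lo hi c f :
  csum lo hi (fun k => Cmult c (f k)) = Cmult c (csum lo hi f).
Proof. apply csum_from_scal. Qed.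

Lemma csum_delta lo hi i f :
  (lo <= i <= hi)%nat ->
  csum lo hi (fun k => if Nat.eqb k i then f k else RtoC 0) = f i.
Proof. intros; unfold csum; apply csum_from_delta; lia. Qed.

Lemma csum_swap lo1 hi1 lo2 hi2 (g : nat -> nat -> C) :
  csum lo1 hi1 (fun r => csum lo2 hi2 (fun s => g r s)) =
  csum lo2 hi2 (fun s => csum lo1 hi1 (fun r => g r s)).
Proof. apply csum_from_swap. Qed.

Lemma csum_split4 m f : (1 <= m)%nat ->
  csum 1 (m + 4) f = Cplus (csum 1 m f)
    (Cplus (f (m+1)%nat) (Cplus (f (m+2)%nat) (Cplus (f (m+3)%nat) (f (m+4)%nat)))).
Proof.
  intros Hm. unfold csum.
  replace (S (m + 4) - 1)%nat with (m + 4)%nat by lia.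
  replace (S m - 1)%nat with m by lia.
  rewrite csum_from_app. simpl.
  replace (S m) with (m+1)%nat by lia.
  replace (S (m+1)) with (m+2)%nat by lia.
  replace (S (m+2)) with (m+3)%nat by lia.
  replace (S (m+3)) with (m+4)%nat by lia.
  ring.
Qed.
Ltac bdestr := repeat match goal with
  | |- context [Nat.leb ?a ?b] => destruct (Nat.leb_spec a b)
  | |- context [Nat.eqb ?a ?b] => destruct (Nat.eqb_spec a b)
  | |- context [Nat.ltb ?a ?b] => destruct (Nat.ltb_spec a b)
  end.

Lemma mulI_S m n Ups us r s j : (j <= m)%nat ->
  mulI m n Ups us r s j = if ((Nat.eqb r j) && (Nat.eqb s j))%bool then RtoC 1 else RtoC 0.
Proof.
  intros Hj. unfold mulI, basisI, inrange.
  do 4 (cbv beta iota delta [andb]; bdestr; try subst); simpl; try lia; try reflexivity.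
Qed.

Lemma mulI_N m n Ups us r s j : (m < j <= n)%nat -> (1 <= us j <= m)%nat ->
  mulI m n Ups us r s j =
  Cplus (Cplus (if ((Nat.eqb r (us j)) && (Nat.eqb s j))%bool then RtoC 1 else RtoC 0)
               (if ((Nat.eqb r j) && (Nat.eqb s (us j)))%bool then RtoC 1 else RtoC 0))
        (if ((m <? r) && (r <? j) && (m <? s) && (s <? j))%bool then Ups r s j else RtoC 0).
Proof.
  intros Hj Hu. unfold mulI, basisI, inrange.
  do 4 (cbv beta iota delta [andb]; bdestr; try subst); simpl; try lia; try ring.
Qed.

Definition NN m n (Ups : nat -> nat -> nat -> C) (x y : Elt) j :=
  csum 1 n (fun r => csum 1 n (fun s =>
    if ((m <? r) && (r <? j) && (m <? s) && (s <? j))%bool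
    then Cmult (Cmult (x r) (y s)) (Ups r s j) else RtoC 0)).

Lemma emul_S m n Ups us x y j : (1 <= j <= m)%nat -> (m <= n)%nat ->
  emul m n Ups us x y j = Cmult (x j) (y j).
Proof.
  intros Hj Hn. unfold emul.
  rewrite (csum_ext _ _ _ (fun r => if Nat.eqb r j then Cmult (x r) (y j) else RtoC 0)).
  - apply csum_delta. lia.
  - intros r Hr.
    rewrite (csum_ext _ _ _ (fun s => if Nat.eqb s j then
               (if Nat.eqb r j then Cmult (x r) (y s) else RtoC 0) else RtoC 0)).
    + rewrite csum_delta by lia. reflexivity.
    + intros s Hs. rewrite mulI_S by lia.
      destruct (Nat.eqb r j), (Nat.eqb s j); simpl; ring.
Qed.

Lemma emul_N m n Ups us x y j : (m < j <= n)%nat -> (1 <= us j <= m)%nat ->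
  emul m n Ups us x y j =
  Cplus (Cplus (Cmult (x (us j)) (y j)) (Cmult (x j) (y (us j)))) (NN m n Ups x y j).
Proof.
  intros Hj Hu. unfold emul, NN.
  rewrite (csum_ext _ _ _ (fun r =>
    Cplus (Cplus (if Nat.eqb r (us j) then Cmult (x r) (y j) else RtoC 0)
                 (if Nat.eqb r j then Cmult (x r) (y (us j)) else RtoC 0))
     (csum 1 n (fun s =>
    if ((m <? r) && (r <? j) && (m <? s) && (s <? j))%bool
    then Cmult (Cmult (x r) (y s)) (Ups r s j) else RtoC 0)))).
  - rewrite !csum_plus. rewrite !csum_delta by lia. reflexivity.
  - intros r Hr.
    rewrite (csum_ext _ _ _ (fun s =>
      Cplus (Cplus (if Nat.eqb s j then (if Nat.eqb r (us j) then Cmult (x r) (y s) else RtoC 0) else RtoC 0)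
                   (if Nat.eqb s (us j) then (if Nat.eqb r j then Cmult (x r) (y s) else RtoC 0) else RtoC 0))
        (if ((m <? r) && (r <? j) && (m <? s) && (s <? j))%bool
         then Cmult (Cmult (x r) (y s)) (Ups r s j) else RtoC 0))).
    + rewrite !csum_plus. rewrite !csum_delta by lia.
      destruct (Nat.eqb r (us j)), (Nat.eqb r j); reflexivity.
    + intros s Hs. rewrite mulI_N by lia.
      destruct (Nat.eqb r (us j)), (Nat.eqb s j), (Nat.eqb r j), (Nat.eqb s (us j)),
        ((m <? r) && (r <? j) && (m <? s) && (s <? j))%bool; simpl; ring.
Qed.

Lemma emul_basis m n Ups us x k j : (1 <= k <= n)%nat ->
  emul m n Ups us x (basisI k) j = csum 1 n (fun r => Cmult (x r) (mulI m n Ups us r k j)).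
Proof.
  intros Hk. unfold emul. apply csum_ext. intros r Hr.
  rewrite (csum_ext _ _ _ (fun s => if Nat.eqb s k then Cmult (x r) (mulI m n Ups us r s j) else RtoC 0)).
  - rewrite csum_delta by lia. reflexivity.
  - intros s Hs. unfold basisI. destruct (Nat.eqb s k); ring.
Qed.

Lemma emul_lin m n Ups us x y j :
  emul m n Ups us x y j = csum 1 n (fun k => Cmult (y k) (emul m n Ups us x (basisI k) j)).
Proof.
  rewrite (csum_ext _ _ _ (fun k => csum 1 n (fun r => Cmult (Cmult (x r) (y k)) (mulI m n Ups us r k j)))).
  - rewrite csum_swap. reflexivity.
  - intros k Hk. rewrite emul_basis by lia. rewrite <- csum_scal. apply csum_ext. intros; ring.
Qed.

Lemma csum_basis n (al : Elt) j : (1 <= j <= n)%nat ->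
  csum 1 n (fun k => Cmult (al k) (basisI k j)) = al j.
Proof.
  intros Hj. rewrite (csum_ext _ _ _ (fun k => if Nat.eqb k j then al k else RtoC 0)).
  - apply csum_delta; lia.
  - intros k Hk. unfold basisI. destruct (Nat.eqb_spec j k), (Nat.eqb_spec k j); try lia; ring.
Qed.

Ltac ltb_eval := repeat match goal with
  | |- context [Nat.ltb ?a ?b] => first
      [ replace (Nat.ltb a b) with true by (symmetry; apply Nat.ltb_lt; lia)
      | replace (Nat.ltb a b) with false by (symmetry; apply Nat.ltb_ge; lia) ]
  end.

Ltac NN_tac :=
  unfold NN; rewrite csum_split4 by lia;
  rewrite (csum_ext 1 _ _ (fun _ => RtoC 0)) by
    (intros k Hk; rewrite (csum_ext 1 _ _ (fun _ => RtoC 0)) by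
       (intros k' Hk'; ltb_eval; reflexivity); apply csum_zero);
  rewrite csum_zero;
  rewrite !csum_split4 by lia;
  repeat (rewrite (csum_ext 1 _ _ (fun _ => RtoC 0)) by (intros k Hk; ltb_eval; simpl; reflexivity); rewrite csum_zero);
  ltb_eval; simpl; ring.

Section NNs.
Variables (m : nat) (Ups : nat -> nat -> nat -> C) (x y : Elt).
Hypothesis Hm : (1 <= m)%nat.
Let c r s k := Ups (m + r)%nat (m + s)%nat (m + k)%nat.
Let x' k := x (m + k)%nat.
Let y' k := y (m + k)%nat.

Lemma NN_1 : NN m (m + 4) Ups x y (m + 1) = RtoC 0.
Proof. NN_tac. Qed.

Lemma NN_2 : NN m (m + 4) Ups x y (m + 2) = Cmult (Cmult (x' 1) (y' 1)) (c 1 1 2).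
Proof. unfold c, x', y'. NN_tac. Qed.

Lemma NN_3 : NN m (m + 4) Ups x y (m + 3) =
  Cplus (Cplus (Cmult (Cmult (x' 1) (y' 1)) (c 1 1 3)) (Cmult (Cmult (x' 1) (y' 2)) (c 1 2 3)))
        (Cplus (Cmult (Cmult (x' 2) (y' 1)) (c 2 1 3)) (Cmult (Cmult (x' 2) (y' 2)) (c 2 2 3))).
Proof. unfold c, x', y'. NN_tac. Qed.

Lemma NN_4 : NN m (m + 4) Ups x y (m + 4) =
  Cplus (Cplus (Cplus (Cmult (Cmult (x' 1) (y' 1)) (c 1 1 4)) (Cmult (Cmult (x' 1) (y' 2)) (c 1 2 4)))
               (Cmult (Cmult (x' 1) (y' 3)) (c 1 3 4)))
  (Cplus (Cplus (Cplus (Cmult (Cmult (x' 2) (y' 1)) (c 2 1 4)) (Cmult (Cmult (x' 2) (y' 2)) (c 2 2 4)))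
               (Cmult (Cmult (x' 2) (y' 3)) (c 2 3 4)))
         (Cplus (Cplus (Cmult (Cmult (x' 3) (y' 1)) (c 3 1 4)) (Cmult (Cmult (x' 3) (y' 2)) (c 3 2 4)))
               (Cmult (Cmult (x' 3) (y' 3)) (c 3 3 4)))).
Proof. unfold c, x', y'. NN_tac. Qed.
End NNs.

Definition ccont (f : R -> C) (t : R) :=
  continuous (fun s => fst (f s)) t /\ continuous (fun s => snd (f s)) t.
Definition cder (f : R -> C) (t : R) (d : C) :=
  is_derive (fun s => fst (f s)) t (fst d) /\ is_derive (fun s => snd (f s)) t (snd d).
Definition isCI (f : R -> C) (l : C) :=
  is_RInt (fun s => fst (f s)) 0 (2 * PI) (fst l) /\
  is_RInt (fun s => snd (f s)) 0 (2 * PI) (snd l).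

Lemma rcont_sq (h : R -> R) t : continuous h t -> continuous (fun s => h s ^ 2) t.
Proof. intros H. exact (continuous_mult _ _ _ H (continuous_mult _ _ _ H (continuous_const 1 t))). Qed.

Lemma ccont_const c t : ccont (fun _ => c) t.
Proof. split; apply continuous_const. Qed.

Lemma ccont_RtoC g t : continuous g t -> ccont (fun s => RtoC (g s)) t.
Proof. intros H; split; simpl; auto. apply continuous_const. Qed.

Lemma ccont_plus f g t : ccont f t -> ccont g t -> ccont (fun s => Cplus (f s) (g s)) t.
Proof. intros [H1 H2] [H3 H4]; split; simpl.
  exact (continuous_plus _ _ _ H1 H3). exact (continuous_plus _ _ _ H2 H4). Qed.

Lemma ccont_opp f t : ccont f t -> ccont (fun s => Copp (f s)) t.
Proof. intros [H1 H2]; split; simpl.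
  exact (continuous_opp _ _ H1). exact (continuous_opp _ _ H2). Qed.

Lemma ccont_mult f g t : ccont f t -> ccont g t -> ccont (fun s => Cmult (f s) (g s)) t.
Proof. intros [H1 H2] [H3 H4]; split; simpl.
  exact (continuous_minus _ _ _ (continuous_mult _ _ _ H1 H3) (continuous_mult _ _ _ H2 H4)).
  exact (continuous_plus _ _ _ (continuous_mult _ _ _ H1 H4) (continuous_mult _ _ _ H2 H3)).
Qed.

Lemma Cnz_norm (z : C) : z <> RtoC 0 -> fst z ^ 2 + snd z ^ 2 <> 0.
Proof.
  intros H E. apply H. destruct z as [p q]; simpl in *.
  assert (p = 0) by nra. assert (q = 0) by nra. subst. reflexivity.
Qed.

Lemma ccont_inv f t : ccont f t -> f t <> RtoC 0 -> ccont (fun s => Cinv (f s)) t.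
Proof. intros [H1 H2] Hnz. pose proof (Cnz_norm _ Hnz) as Hn.
  assert (Hd : continuous (fun s => fst (f s) ^ 2 + snd (f s) ^ 2) t).
  { exact (continuous_plus _ _ _ (rcont_sq _ _ H1) (rcont_sq _ _ H2)). }
  split; simpl.
  exact (continuous_mult _ _ _ H1 (continuous_Rinv_comp _ _ Hd Hn)).
  exact (continuous_mult _ _ _ (continuous_opp _ _ H2) (continuous_Rinv_comp _ _ Hd Hn)).
Qed.

Lemma ccont_div f g t : ccont f t -> ccont g t -> g t <> RtoC 0 ->
  ccont (fun s => Cdiv (f s) (g s)) t.
Proof. intros. unfold Cdiv. apply ccont_mult; auto. apply ccont_inv; auto. Qed.

Lemma ccont_minus f g t : ccont f t -> ccont g t -> ccont (fun s => Cminus (f s) (g s)) t.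
Proof. intros. unfold Cminus. apply ccont_plus; auto. apply ccont_opp; auto. Qed.

Lemma rder_val (f : R -> R) (x l l' : R) : is_derive f x l -> l = l' -> is_derive f x l'.
Proof. intros H ->; auto. Qed.

Lemma cder_val f t d d' : cder f t d -> d = d' -> cder f t d'.
Proof. intros H ->; auto. Qed.

Lemma cder_const c t : cder (fun _ => c) t (RtoC 0).
Proof. split; simpl; exact (is_derive_const (K:=R_AbsRing) (V:=R_NormedModule) _ t). Qed.

Lemma cder_RtoC g t dg : is_derive g t dg -> cder (fun s => RtoC (g s)) t (RtoC dg).
Proof. intros H; split; simpl; auto. exact (is_derive_const (K:=R_AbsRing) (V:=R_NormedModule) _ t). Qed.

Lemma cder_plus f g t df dg : cder f t df -> cder g t dg ->
  cder (fun s => Cplus (f s) (g s)) t (Cplus df dg).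
Proof. intros [H1 H2] [H3 H4]; split; simpl.
  exact (is_derive_plus _ _ _ _ _ H1 H3). exact (is_derive_plus _ _ _ _ _ H2 H4). Qed.

Lemma cder_opp f t df : cder f t df -> cder (fun s => Copp (f s)) t (Copp df).
Proof. intros [H1 H2]; split; simpl.
  exact (is_derive_opp _ _ _ H1). exact (is_derive_opp _ _ _ H2). Qed.

Lemma cder_mult f g t df dg : cder f t df -> cder g t dg ->
  cder (fun s => Cmult (f s) (g s)) t (Cplus (Cmult df (g t)) (Cmult (f t) dg)).
Proof. intros [H1 H2] [H3 H4]; split; simpl.
  - eapply rder_val.
    exact (is_derive_minus _ _ _ _ _ (is_derive_mult _ _ _ _ _ H1 H3 Rmult_comm)
                                    (is_derive_mult _ _ _ _ _ H2 H4 Rmult_comm)).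
    simpl. unfold minus, plus, opp, mult; simpl. ring.
  - eapply rder_val.
    exact (is_derive_plus _ _ _ _ _ (is_derive_mult _ _ _ _ _ H1 H4 Rmult_comm)
                                    (is_derive_mult _ _ _ _ _ H2 H3 Rmult_comm)).
    simpl. unfold minus, plus, opp, mult; simpl. ring.
Qed.

Lemma rder_sq h t dh : is_derive h t dh -> is_derive (fun s => h s ^ 2) t (2 * h t * dh).
Proof. intros H. eapply rder_val.
  exact (is_derive_mult _ _ _ _ _ H (is_derive_mult _ _ _ _ _ H (is_derive_const 1 t) Rmult_comm) Rmult_comm).
  simpl. unfold plus, mult, zero; simpl. ring. Qed.

Lemma cder_inv f t df : cder f t df -> f t <> RtoC 0 ->
  cder (fun s => Cinv (f s)) t (Copp (Cmult df (Cinv (Cmult (f t) (f t))))).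
Proof. intros [H1 H2] Hnz. pose proof (Cnz_norm _ Hnz) as Hn.
  assert (Hd : is_derive (fun s => fst (f s) ^ 2 + snd (f s) ^ 2) t
                 (2 * fst (f t) * fst df + 2 * snd (f t) * snd df)).
  { exact (is_derive_plus _ _ _ _ _ (rder_sq _ _ _ H1) (rder_sq _ _ _ H2)). }
  split; simpl.
  - eapply rder_val. exact (is_derive_div _ _ _ _ _ H1 Hd Hn).
    cbv beta. set (p := fst (f t)) in *. set (q := snd (f t)) in *. clearbody p q.
    field. split; [|intro E0; apply Hn; nra].
    intro E. apply Hn. nra.
  - eapply rder_val. exact (is_derive_div _ _ _ _ _ (is_derive_opp _ _ _ H2) Hd Hn).
    unfold opp; simpl; cbv beta. set (p := fst (f t)) in *. set (q := snd (f t)) in *. clearbody p q.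
    field. split; [|intro E0; apply Hn; nra].
    intro E. apply Hn. nra.
Qed.

Lemma twoPI_pos : 0 < 2 * PI.
Proof. pose proof PI_RGT_0. lra. Qed.

Lemma Rmin_02 : Rmin 0 (2 * PI) = 0.
Proof. apply Rmin_left. pose proof twoPI_pos. lra. Qed.
Lemma Rmax_02 : Rmax 0 (2 * PI) = 2 * PI.
Proof. apply Rmax_right. pose proof twoPI_pos. lra. Qed.

Lemma rint_val (f : R -> R) a b (l l' : R) : is_RInt f a b l -> l = l' -> is_RInt f a b l'.
Proof. intros H ->; auto. Qed.

Lemma isCI_plus f g l1 l2 : isCI f l1 -> isCI g l2 ->
  isCI (fun s => Cplus (f s) (g s)) (Cplus l1 l2).
Proof. intros [H1 H2] [H3 H4]; split; simpl.
  exact (is_RInt_plus _ _ _ _ _ _ H1 H3). exact (is_RInt_plus _ _ _ _ _ _ H2 H4). Qed.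

Lemma isCI_mull c f l : isCI f l -> isCI (fun s => Cmult c (f s)) (Cmult c l).
Proof. intros [H1 H2]; split; simpl.
  exact (is_RInt_minus _ _ _ _ _ _ (is_RInt_scal _ _ _ (fst c) _ H1) (is_RInt_scal _ _ _ (snd c) _ H2)).
  exact (is_RInt_plus _ _ _ _ _ _ (is_RInt_scal _ _ _ (fst c) _ H2) (is_RInt_scal _ _ _ (snd c) _ H1)).
Qed.

Lemma isCI_mulr c f l : isCI f l -> isCI (fun s => Cmult (f s) c) (Cmult l c).
Proof. intros H. destruct (isCI_mull c f l H) as [H1 H2]. split.
  - eapply is_RInt_ext; [|eapply rint_val; [exact H1|]]. intros; simpl; ring. simpl; ring.
  - eapply is_RInt_ext; [|eapply rint_val; [exact H2|]]. intros; simpl; ring. simpl; ring.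
Qed.

Lemma isCI_ext f g l : (forall t, 0 < t < 2 * PI -> f t = g t) -> isCI f l -> isCI g l.
Proof. intros He [H1 H2]; split.
  - eapply is_RInt_ext; [|exact H1]. rewrite Rmin_02, Rmax_02. intros x Hx; rewrite He; auto.
  - eapply is_RInt_ext; [|exact H2]. rewrite Rmin_02, Rmax_02. intros x Hx; rewrite He; auto.
Qed.

Lemma isCI_CInt f : (forall t, 0 <= t <= 2 * PI -> ccont f t) -> isCI f (CInt f 0 (2 * PI)).
Proof.
  intros H. split; simpl; apply (RInt_correct (V := R_CompleteNormedModule));
  apply ex_RInt_continuous; rewrite Rmin_02, Rmax_02; intros z Hz; apply H; auto.
Qed.

Lemma isCI_unique f l : isCI f l -> CInt f 0 (2 * PI) = l.
Proof. intros [H1 H2]. unfold CInt, Re, Im. destruct l as [l1 l2]. simpl in *.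
  rewrite (is_RInt_unique _ _ _ _ H1), (is_RInt_unique _ _ _ _ H2). reflexivity. Qed.

Lemma CInt_ext f g : (forall t, 0 < t < 2 * PI -> f t = g t) ->
  CInt f 0 (2 * PI) = CInt g 0 (2 * PI).
Proof. intros He. unfold CInt. f_equal; apply RInt_ext; rewrite Rmin_02, Rmax_02;
  intros x Hx; rewrite He; auto. Qed.

Lemma isCI_derive F f : (forall t, 0 <= t <= 2 * PI -> cder F t (f t)) ->
  (forall t, 0 <= t <= 2 * PI -> ccont f t) ->
  isCI f (Cminus (F (2 * PI)) (F 0)).
Proof.
  intros Hd Hc. split; simpl.
  - eapply rint_val. apply (is_RInt_derive (V := R_CompleteNormedModule)
        (fun s => fst (F s)) (fun s => fst (f s)));
    rewrite Rmin_02, Rmax_02; intros x Hx; [apply (Hd x Hx) | apply (Hc x Hx)].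
    unfold minus, plus, opp; simpl; ring.
  - eapply rint_val. apply (is_RInt_derive (V := R_CompleteNormedModule)
        (fun s => snd (F s)) (fun s => snd (f s)));
    rewrite Rmin_02, Rmax_02; intros x Hx; [apply (Hd x Hx) | apply (Hc x Hx)].
    unfold minus, plus, opp; simpl; ring.
Qed.

Lemma cder_ext f g t d : (forall s, f s = g s) -> cder g t d -> cder f t d.
Proof. intros He [H1 H2]; split.
  - eapply is_derive_ext; [|exact H1]. intros s; simpl; rewrite He; reflexivity.
  - eapply is_derive_ext; [|exact H2]. intros s; simpl; rewrite He; reflexivity.
Qed.

Lemma cder_ccont f t d : cder f t d -> ccont f t.
Proof. intros [H1 H2]; split.
  exact (ex_derive_continuous (K:=R_AbsRing) (V:=R_NormedModule) _ _ (ex_intro _ _ H1)).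
  exact (ex_derive_continuous (K:=R_AbsRing) (V:=R_NormedModule) _ _ (ex_intro _ _ H2)). Qed.

Lemma cder_div f g t df dg : cder f t df -> cder g t dg -> g t <> RtoC 0 ->
  cder (fun s => Cdiv (f s) (g s)) t
    (Cplus (Cmult df (Cinv (g t))) (Cmult (f t) (Copp (Cmult dg (Cinv (Cmult (g t) (g t))))))).
Proof. intros H1 H2 Hg. unfold Cdiv. apply cder_mult; auto. apply cder_inv; auto. Qed.

Lemma isCI_zero_of f l (FF : R -> C) : isCI f l ->
  (forall t, 0 <= t <= 2 * PI -> cder FF t (f t)) ->
  (forall t, 0 <= t <= 2 * PI -> ccont f t) -> FF (2 * PI) = FF 0 -> l = RtoC 0.
Proof.
  intros H1 Hd Hc Hp. pose proof (isCI_derive FF f Hd Hc) as H2.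
  rewrite <- (isCI_unique _ _ H1), (isCI_unique _ _ H2), Hp. ring.
Qed.

Lemma isCI_eq_of f l g : isCI f l -> (forall t, 0 < t < 2 * PI -> f t = g t) ->
  l = CInt g 0 (2 * PI).
Proof. intros H He. rewrite <- (isCI_unique _ _ H). apply CInt_ext; auto. Qed.

Lemma Cderiv_cder f t d : cder f t d -> Cderiv f t = d.
Proof. intros [H1 H2]. unfold Cderiv, Re, Im.
  replace (Derive (fun s => fst (f s)) t) with (fst d) by (symmetry; apply is_derive_unique; exact H1).
  replace (Derive (fun s => snd (f s)) t) with (snd d) by (symmetry; apply is_derive_unique; exact H2).
  destruct d; reflexivity. Qed.

Lemma Ceq0_dec (z : C) : {z = RtoC 0} + {z <> RtoC 0}.
Proof. destruct z as [x y]. destruct (Req_EM_T x 0), (Req_EM_T y 0); subst.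
  left; reflexivity. all: right; intro E; injection E; intros; contradiction. Qed.

Lemma Cdiv_one (X Y : C) : Y <> RtoC 0 -> Cdiv X Y = RtoC 1 -> X = Y.
Proof. intros HY H. replace X with (Cmult (Cdiv X Y) Y) by (field; auto). rewrite H. ring. Qed.

Lemma isCI_zero0 : isCI (fun _ => RtoC 0) (RtoC 0).
Proof. split; simpl; eapply rint_val; try apply (is_RInt_const (V:=R_NormedModule));
  unfold scal; simpl; unfold mult; simpl; ring. Qed.

Ltac eqb_eval := repeat match goal with
  | |- context [Nat.eqb ?a ?b] => first
      [ rewrite (proj2 (Nat.eqb_eq a b)) by lia
      | rewrite (proj2 (Nat.eqb_neq a b)) by lia ]
  end.
Ltac leb_eval := repeat match goal with
  | |- context [Nat.leb ?a ?b] => first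
      [ rewrite (proj2 (Nat.leb_le a b)) by lia
      | rewrite (proj2 (Nat.leb_gt a b)) by lia ]
  end.

Lemma eone_S m j : (1 <= j <= m)%nat -> eone m j = RtoC 1.
Proof. intros. unfold eone, inrange. leb_eval. reflexivity. Qed.
Lemma eone_N m j : (m < j)%nat -> eone m j = RtoC 0.
Proof. intros. unfold eone, inrange. leb_eval. rewrite Bool.andb_false_r. reflexivity. Qed.

Definition sg m (us : nat -> nat) (Z : Elt) i := Z (us (m + i)%nat).
Definition cc m (Ups : nat -> nat -> nat -> C) r s k := Ups (m+r)%nat (m+s)%nat (m+k)%nat.
Definition zz m (Z : Elt) i := Z (m+i)%nat.

Definition q1 m (Ups : nat -> nat -> nat -> C) us Z :=
  Copp (Cdiv (Cplus (Cmult (zz m Z 1) (Cinv (sg m us Z 1))) (RtoC 0)) (sg m us Z 1)).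
Definition q2 m Ups us Z :=
  Copp (Cdiv (Cplus (Cmult (zz m Z 2) (Cinv (sg m us Z 2)))
                    (Cmult (Cmult (zz m Z 1) (q1 m Ups us Z)) (cc m Ups 1 1 2))) (sg m us Z 2)).
Definition q3 m Ups us Z :=
  Copp (Cdiv (Cplus (Cmult (zz m Z 3) (Cinv (sg m us Z 3)))
   (Cplus (Cplus (Cmult (Cmult (zz m Z 1) (q1 m Ups us Z)) (cc m Ups 1 1 3))
                 (Cmult (Cmult (zz m Z 1) (q2 m Ups us Z)) (cc m Ups 1 2 3)))
          (Cplus (Cmult (Cmult (zz m Z 2) (q1 m Ups us Z)) (cc m Ups 2 1 3))
                 (Cmult (Cmult (zz m Z 2) (q2 m Ups us Z)) (cc m Ups 2 2 3))))) (sg m us Z 3)).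
Definition q4 m Ups us Z :=
  Copp (Cdiv (Cplus (Cmult (zz m Z 4) (Cinv (sg m us Z 4)))
  (Cplus (Cplus (Cplus (Cmult (Cmult (zz m Z 1) (q1 m Ups us Z)) (cc m Ups 1 1 4))
                       (Cmult (Cmult (zz m Z 1) (q2 m Ups us Z)) (cc m Ups 1 2 4)))
               (Cmult (Cmult (zz m Z 1) (q3 m Ups us Z)) (cc m Ups 1 3 4)))
  (Cplus (Cplus (Cplus (Cmult (Cmult (zz m Z 2) (q1 m Ups us Z)) (cc m Ups 2 1 4))
                       (Cmult (Cmult (zz m Z 2) (q2 m Ups us Z)) (cc m Ups 2 2 4)))
               (Cmult (Cmult (zz m Z 2) (q3 m Ups us Z)) (cc m Ups 2 3 4)))
         (Cplus (Cplus (Cmult (Cmult (zz m Z 3) (q1 m Ups us Z)) (cc m Ups 3 1 4))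
                       (Cmult (Cmult (zz m Z 3) (q2 m Ups us Z)) (cc m Ups 3 2 4)))
               (Cmult (Cmult (zz m Z 3) (q3 m Ups us Z)) (cc m Ups 3 3 4)))))) (sg m us Z 4)).

Definition Pinv m Ups us (Z : Elt) : Elt := fun k =>
  if Nat.leb k m then Cinv (Z k)
  else if Nat.eqb k (m+1)%nat then q1 m Ups us Z
  else if Nat.eqb k (m+2)%nat then q2 m Ups us Z
  else if Nat.eqb k (m+3)%nat then q3 m Ups us Z
  else q4 m Ups us Z.

Lemma Pinv_S m Ups us Z k : (k <= m)%nat -> Pinv m Ups us Z k = Cinv (Z k).
Proof. intros. unfold Pinv. leb_eval. reflexivity. Qed.
Lemma Pinv_1 m Ups us Z : Pinv m Ups us Z (m+1)%nat = q1 m Ups us Z.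
Proof. unfold Pinv. leb_eval. eqb_eval. reflexivity. Qed.
Lemma Pinv_2 m Ups us Z : Pinv m Ups us Z (m+2)%nat = q2 m Ups us Z.
Proof. unfold Pinv. leb_eval. eqb_eval. reflexivity. Qed.
Lemma Pinv_3 m Ups us Z : Pinv m Ups us Z (m+3)%nat = q3 m Ups us Z.
Proof. unfold Pinv. leb_eval. eqb_eval. reflexivity. Qed.
Lemma Pinv_4 m Ups us Z : Pinv m Ups us Z (m+4)%nat = q4 m Ups us Z.
Proof. unfold Pinv. leb_eval. eqb_eval. reflexivity. Qed.

Ltac emul_eval := repeat (progress (
  repeat match goal with
  | |- context [emul ?m ?n ?U ?u ?x ?y ?j] =>
      first [ rewrite (emul_S m n U u x y j) by lia
            | rewrite (emul_N m n U u x y j) by lia ]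
  end;
  repeat first [ rewrite NN_1 by lia | rewrite NN_2 by lia
               | rewrite NN_3 by lia | rewrite NN_4 by lia ])).

Ltac emul_eval_in H := repeat (progress (
  repeat match type of H with
  | context [emul ?m ?n ?U ?u ?x ?y ?j] =>
      first [ rewrite (emul_S m n U u x y j) in H by lia
            | rewrite (emul_N m n U u x y j) in H by lia ]
  end;
  repeat first [ rewrite NN_1 in H by lia | rewrite NN_2 in H by lia
               | rewrite NN_3 in H by lia | rewrite NN_4 in H by lia ])).

Section Alg.
Variables (m : nat) (Ups : nat -> nat -> nat -> C) (us : nat -> nat).
Hypothesis Hm : (1 <= m)%nat.
Hypothesis Hus1 : (1 <= us (m+1) <= m)%nat.
Hypothesis Hus2 : (1 <= us (m+2) <= m)%nat.
Hypothesis Hus3 : (1 <= us (m+3) <= m)%nat.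
Hypothesis Hus4 : (1 <= us (m+4) <= m)%nat.

Lemma inv_exists (Z : Elt) : (forall u, (1 <= u <= m)%nat -> Z u <> RtoC 0) ->
  eqA (m+4) (emul m (m+4) Ups us Z (Pinv m Ups us Z)) (eone m).
Proof.
  intros Hnz j Hj.
  assert (H1 := Hnz _ Hus1). assert (H2 := Hnz _ Hus2).
  assert (H3 := Hnz _ Hus3). assert (H4 := Hnz _ Hus4).
  destruct (le_lt_dec j m) as [Hjm|Hjm].
  - emul_eval. rewrite eone_S by lia. rewrite Pinv_S by lia. field. apply Hnz; lia.
  - rewrite eone_N by lia.
    assert (Hj4 : (j = m+1 \/ j = m+2 \/ j = m+3 \/ j = m+4)%nat) by lia; destruct Hj4 as [Hj4|[Hj4|[Hj4|Hj4]]]; subst j;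
    emul_eval; rewrite ?Pinv_1, ?Pinv_2, ?Pinv_3, ?Pinv_4;
    rewrite !Pinv_S by lia.
    + unfold q1, zz, sg, cc. field. auto.
    + unfold q2, zz, sg, cc. field. auto.
    + unfold q3, zz, sg, cc. field. auto.
    + unfold q4, zz, sg, cc. field. auto.
Qed.

Lemma solve1 (s y X : C) : s <> RtoC 0 -> Cplus (Cmult s y) X = RtoC 0 -> y = Copp (Cdiv X s).
Proof. intros Hs H. replace X with (Cminus (Cplus (Cmult s y) X) (Cmult s y)) by ring.
  rewrite H. field. auto. Qed.

Lemma inv_unique (Z Psi : Elt) : (forall u, (1 <= u <= m)%nat -> Z u <> RtoC 0) ->
  eqA (m+4) (emul m (m+4) Ups us Z Psi) (eone m) ->
  forall k, (1 <= k <= m+4)%nat -> Psi k = Pinv m Ups us Z k.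
Proof.
  intros Hnz HE.
  assert (HS : forall u, (1 <= u <= m)%nat -> Psi u = Cinv (Z u)).
  { intros u Hu. specialize (HE u ltac:(lia)). emul_eval_in HE. rewrite eone_S in HE by lia.
    replace (Psi u) with (Cdiv (Cmult (Z u) (Psi u)) (Z u)) by (field; apply Hnz; lia).
    rewrite HE. field. apply Hnz; lia. }
  assert (H1 := Hnz _ Hus1). assert (H2 := Hnz _ Hus2).
  assert (H3 := Hnz _ Hus3). assert (H4 := Hnz _ Hus4).
  assert (E1 : Psi (m+1)%nat = q1 m Ups us Z).
  { specialize (HE (m+1)%nat ltac:(lia)). emul_eval_in HE. rewrite eone_N in HE by lia.
    rewrite <- Cplus_assoc in HE. apply solve1 in HE; auto. rewrite HE.
    rewrite (HS (us (m+1)%nat)) by lia. unfold q1, zz, sg, cc. field. auto. }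
  assert (E2 : Psi (m+2)%nat = q2 m Ups us Z).
  { specialize (HE (m+2)%nat ltac:(lia)). emul_eval_in HE. rewrite eone_N in HE by lia.
    rewrite <- Cplus_assoc in HE. apply solve1 in HE; auto. rewrite HE.
    rewrite (HS (us (m+2)%nat)) by lia. rewrite E1. unfold q2, zz, sg, cc. field. auto. }
  assert (E3 : Psi (m+3)%nat = q3 m Ups us Z).
  { specialize (HE (m+3)%nat ltac:(lia)). emul_eval_in HE. rewrite eone_N in HE by lia.
    rewrite <- Cplus_assoc in HE. apply solve1 in HE; auto. rewrite HE.
    rewrite (HS (us (m+3)%nat)) by lia. rewrite E1, E2. unfold q3, zz, sg, cc. field. auto. }
  assert (E4 : Psi (m+4)%nat = q4 m Ups us Z).
  { specialize (HE (m+4)%nat ltac:(lia)). emul_eval_in HE. rewrite eone_N in HE by lia.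
    rewrite <- Cplus_assoc in HE. apply solve1 in HE; auto. rewrite HE.
    rewrite (HS (us (m+4)%nat)) by lia. rewrite E1, E2, E3. unfold q4, zz, sg, cc. field. auto. }
  intros k Hk. destruct (le_lt_dec k m).
  - rewrite Pinv_S by lia. apply HS; lia.
  - assert (Hj4 : (k = m+1 \/ k = m+2 \/ k = m+3 \/ k = m+4)%nat) by lia; destruct Hj4 as [Hj4|[Hj4|[Hj4|Hj4]]]; subst k.
    + rewrite Pinv_1; auto. + rewrite Pinv_2; auto. + rewrite Pinv_3; auto. + rewrite Pinv_4; auto.
Qed.
End Alg.

Ltac eqb_eval_in H := repeat match type of H with
  | context [Nat.eqb ?a ?b] => first
      [ rewrite (proj2 (Nat.eqb_eq a b)) in H by lia
      | rewrite (proj2 (Nat.eqb_neq a b)) in H by lia ]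
  end.

Lemma assoc_rel m Ups us : (1 <= m)%nat ->
  (forall i, (1 <= i <= 4)%nat -> (1 <= us (m+i) <= m)%nat) ->
  (forall r s t, (1 <= r <= m+4)%nat -> (1 <= s <= m+4)%nat -> (1 <= t <= m+4)%nat ->
     eqA (m+4) (emul m (m+4) Ups us (emul m (m+4) Ups us (basisI r) (basisI s)) (basisI t))
           (emul m (m+4) Ups us (basisI r) (emul m (m+4) Ups us (basisI s) (basisI t)))) ->
  forall r s k, (1 <= r)%nat -> (1 <= s)%nat -> (r < k)%nat -> (s < k)%nat -> (k <= 4)%nat ->
  Ups (m+r)%nat (m+s)%nat (m+k)%nat <> RtoC 0 -> us (m+k)%nat = us (m+r)%nat.
Proof.
  intros Hm Hus HA r s k Hr Hs Hrk Hsk Hk4 Hc.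
  assert (Hus1 := Hus 1%nat ltac:(lia)). assert (Hus2 := Hus 2%nat ltac:(lia)).
  assert (Hus3 := Hus 3%nat ltac:(lia)). assert (Hus4 := Hus 4%nat ltac:(lia)).
  destruct (Nat.eq_dec (us (m+k)%nat) (us (m+r)%nat)) as [e|ne]; auto.
  exfalso. apply Hc.
  specialize (HA (us (m+k)%nat) (m+r)%nat (m+s)%nat ltac:(pose proof (Hus k ltac:(lia)); lia) ltac:(lia) ltac:(lia) (m+k)%nat ltac:(lia)).
  destruct k as [|[|[|[|[|k]]]]]; try lia;
  destruct r as [|[|[|[|r]]]]; try lia;
  destruct s as [|[|[|[|s]]]]; try lia;
  emul_eval_in HA; unfold basisI in HA; cbv beta in HA; eqb_eval_in HA;
  match type of HA with ?L = ?R => match goal with |- ?G = _ =>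
    let Hx := fresh in
    assert (Hx : Cminus R L = G) by ring;
    rewrite HA in Hx; rewrite <- Hx; ring end end.
Qed.

Definition CIk (Psi : R -> Elt) (g : R -> R) : Elt :=
  fun k => CInt (fun t => Cmult (Psi t k) (RtoC (g t))) 0 (2 * PI).

Lemma emul_ext_r m n Ups us x y y' j : (forall k, (1 <= k <= n)%nat -> y k = y' k) ->
  emul m n Ups us x y j = emul m n Ups us x y' j.
Proof. intros H. unfold emul. apply csum_ext; intros r Hr. apply csum_ext; intros s Hs.
  rewrite H by lia. reflexivity. Qed.

Lemma lineint_form m n Ups us a b gx gy gz Psi j : (1 <= j <= n)%nat ->
  lineint m n Ups us a b gx gy gz Psi j =
  Cplus (CIk Psi (Derive gx) j)
    (Cplus (emul m n Ups us a (CIk Psi (Derive gy)) j) (emul m n Ups us b (CIk Psi (Derive gz)) j)).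
Proof.
  intros Hj. unfold lineint. rewrite !csum_plus.
  rewrite (emul_lin m n Ups us a), (emul_lin m n Ups us b).
  rewrite (csum_basis n (CIk Psi (Derive gx))) by lia. reflexivity.
Qed.

Ltac ccont_tac HZc Hc1 Hc2 Hc3 Hnz :=
  repeat (cbv beta; match goal with
  | |- ccont (fun _ => ?c) _ => apply ccont_const
  | |- ccont (fun s => Cplus (@?f s) (@?g s)) _ => apply ccont_plus
  | |- ccont (fun s => Copp (@?f s)) _ => apply ccont_opp
  | |- ccont (fun s => Cdiv (@?f s) (@?g s)) _ => apply ccont_div
  | |- ccont (fun s => Cinv (@?f s)) _ => apply ccont_inv
  | |- ccont (fun s => Cmult (@?f s) (@?g s)) _ => apply ccont_mult
  | |- ccont (fun s => RtoC (@?f s)) _ => apply ccont_RtoC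
  | |- ccont (fun s => _ s _) _ => apply HZc
  | |- continuous _ _ => first [apply Hc1 | apply Hc2 | apply Hc3]
  | |- _ <> RtoC 0 => apply Hnz; lia
  end).

Ltac cder_tac HZd :=
  repeat (cbv beta; match goal with
  | |- cder (fun _ => ?c) _ _ => eapply cder_const
  | |- cder (fun s => Cplus (@?f s) (@?g s)) _ _ => eapply cder_plus
  | |- cder (fun s => Copp (@?f s)) _ _ => eapply cder_opp
  | |- cder (fun s => Cdiv (@?f s) (@?g s)) _ _ => eapply cder_div
  | |- cder (fun s => Cinv (@?f s)) _ _ => eapply cder_inv
  | |- cder (fun s => Cmult (@?f s) (@?g s)) _ _ => eapply cder_mult
  | |- cder (fun s => _ s _) _ _ => eapply HZd
  end).

Ltac isCI_tac cont :=
  match goal with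
  | |- isCI _ (Cplus _ _) => eapply isCI_plus; [isCI_tac cont | isCI_tac cont]
  | |- isCI _ (Cmult ?X ?Y) =>
      lazymatch Y with
      | context [CInt _ _ _] => eapply isCI_mull; isCI_tac cont
      | _ => eapply isCI_mulr; isCI_tac cont
      end
  | |- isCI _ (CInt _ _ _) => apply isCI_CInt; intros; cont
  | |- isCI _ (RtoC 0) => apply isCI_zero0
  end.

Section Core.
Variables (m : nat) (Ups : nat -> nat -> nat -> C) (us : nat -> nat) (a b : Elt)
  (Z : R -> Elt) (gx gy gz gxd gyd gzd : R -> R).
Hypothesis Hm : (1 <= m)%nat.
Hypothesis Hus1 : (1 <= us (m+1) <= m)%nat.
Hypothesis Hus2 : (1 <= us (m+2) <= m)%nat.
Hypothesis Hus3 : (1 <= us (m+3) <= m)%nat.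
Hypothesis Hus4 : (1 <= us (m+4) <= m)%nat.
Hypothesis Hrel : forall r s k, (1 <= r)%nat -> (1 <= s)%nat -> (r < k)%nat -> (s < k)%nat -> (k <= 4)%nat ->
  Ups (m+r)%nat (m+s)%nat (m+k)%nat <> RtoC 0 -> us (m+k)%nat = us (m+r)%nat.
Hypothesis Hgx : forall t, is_derive gx t (gxd t).
Hypothesis Hgy : forall t, is_derive gy t (gyd t).
Hypothesis Hgz : forall t, is_derive gz t (gzd t).
Hypothesis Hgxc : forall t, continuous gxd t.
Hypothesis Hgyc : forall t, continuous gyd t.
Hypothesis Hgzc : forall t, continuous gzd t.
Hypothesis HZ : forall t k, Z t k = Cplus (Cmult (RtoC (gx t)) (eone m k))
  (Cplus (Cmult (RtoC (gy t)) (a k)) (Cmult (RtoC (gz t)) (b k))).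
Hypothesis Hper : forall k, Z (2 * PI) k = Z 0 k.
Hypothesis Hnz : forall t u, (1 <= u <= m)%nat -> Z t u <> RtoC 0.
Hypothesis Ha1 : a (m+1)%nat = RtoC 0.
Hypothesis Hb1 : b (m+1)%nat = RtoC 0.
Hypothesis Hcase : (a (m+2)%nat = RtoC 0 /\ b (m+2)%nat = RtoC 0) \/
                   (a (m+3)%nat = RtoC 0 /\ b (m+3)%nat = RtoC 0).
Hypothesis Hwind : forall u, (1 <= u <= m)%nat -> winding0 (fun t => Z t u) = RtoC 1.

Definition Dv t k := Cplus (Cmult (RtoC (gxd t)) (eone m k))
  (Cplus (Cmult (RtoC (gyd t)) (a k)) (Cmult (RtoC (gzd t)) (b k))).

Lemma HZd : forall t k, cder (fun s => Z s k) t (Dv t k).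
Proof. intros t k. eapply cder_ext. intros s; apply HZ.
  eapply cder_val. apply cder_plus. apply cder_mult. apply cder_RtoC. apply Hgx. apply cder_const.
  apply cder_plus; (apply cder_mult; [apply cder_RtoC | apply cder_const]). apply Hgy. apply Hgz.
  cbv beta. unfold Dv. ring.
Qed.

Lemma HZc : forall t k, ccont (fun s => Z s k) t.
Proof. intros. eapply cder_ccont. apply HZd. Qed.

Lemma HZ1 : forall t, Z t (m+1)%nat = RtoC 0.
Proof. intros. rewrite HZ, eone_N, Ha1, Hb1 by lia. ring. Qed.

Lemma HD1 : forall t, Dv t (m+1)%nat = RtoC 0.
Proof. intros. unfold Dv. rewrite eone_N, Ha1, Hb1 by lia. ring. Qed.

Lemma q1_zero : forall t, q1 m Ups us (Z t) = RtoC 0.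
Proof. intros. unfold q1, zz. rewrite HZ1. field. apply Hnz; lia. Qed.

Lemma Derive_gx t : Derive gx t = gxd t.
Proof. apply is_derive_unique; auto. Qed.
Lemma Derive_gy t : Derive gy t = gyd t.
Proof. apply is_derive_unique; auto. Qed.
Lemma Derive_gz t : Derive gz t = gzd t.
Proof. apply is_derive_unique; auto. Qed.

Definition PP t := Pinv m Ups us (Z t).

Lemma lineint_PP Psi j : (1 <= j <= m+4)%nat ->
  (forall t, 0 <= t <= 2 * PI -> eqA (m+4) (emul m (m+4) Ups us (Z t) (Psi t)) (eone m)) ->
  lineint m (m+4) Ups us a b gx gy gz Psi j =
  Cplus (CIk PP gxd j) (Cplus (emul m (m+4) Ups us a (CIk PP gyd) j) (emul m (m+4) Ups us b (CIk PP gzd) j)).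
Proof.
  intros Hj HPsi. rewrite lineint_form by lia.
  assert (HC : forall (g g' : R -> R) k, (forall t, g t = g' t) -> (1 <= k <= m+4)%nat ->
     CIk Psi g k = CIk PP g' k).
  { intros g g' k Hg Hk. unfold CIk. apply CInt_ext. intros t Ht. rewrite Hg.
    unfold PP. rewrite (inv_unique m Ups us Hm Hus1 Hus2 Hus3 Hus4 (Z t) (Psi t)
      (fun u Hu => Hnz t u Hu) (HPsi t ltac:(lra)) k Hk). reflexivity. }
  rewrite (HC _ gxd j Derive_gx Hj).
  rewrite (emul_ext_r _ _ _ _ a _ (CIk PP gyd)) by (intros; apply HC; auto; apply Derive_gy).
  rewrite (emul_ext_r _ _ _ _ b _ (CIk PP gzd)) by (intros; apply HC; auto; apply Derive_gz).
  reflexivity.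
Qed.

Lemma CIk_S g u : (1 <= u <= m)%nat ->
  CIk PP g u = CInt (fun t => Cmult (Cinv (Z t u)) (RtoC (g t))) 0 (2 * PI).
Proof. intros. unfold CIk, PP. apply CInt_ext. intros. rewrite Pinv_S by lia. reflexivity. Qed.
Lemma CIk_1 g : CIk PP g (m+1)%nat = CInt (fun t => Cmult (q1 m Ups us (Z t)) (RtoC (g t))) 0 (2 * PI).
Proof. unfold CIk, PP. apply CInt_ext. intros. rewrite Pinv_1. reflexivity. Qed.
Lemma CIk_2 g : CIk PP g (m+2)%nat = CInt (fun t => Cmult (q2 m Ups us (Z t)) (RtoC (g t))) 0 (2 * PI).
Proof. unfold CIk, PP. apply CInt_ext. intros. rewrite Pinv_2. reflexivity. Qed.
Lemma CIk_3 g : CIk PP g (m+3)%nat = CInt (fun t => Cmult (q3 m Ups us (Z t)) (RtoC (g t))) 0 (2 * PI).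
Proof. unfold CIk, PP. apply CInt_ext. intros. rewrite Pinv_3. reflexivity. Qed.
Lemma CIk_4 g : CIk PP g (m+4)%nat = CInt (fun t => Cmult (q4 m Ups us (Z t)) (RtoC (g t))) 0 (2 * PI).
Proof. unfold CIk, PP. apply CInt_ext. intros. rewrite Pinv_4. reflexivity. Qed.

Lemma twoPIi_nz : Cmult (RtoC (2 * PI)) Ci <> RtoC 0.
Proof. intro E. injection E. intros. pose proof PI_RGT_0. lra. Qed.

Ltac eone_eval m := repeat match goal with
  | |- context [eone m ?j] => first [rewrite (eone_S m j) by lia | rewrite (eone_N m j) by lia]
  end.

Ltac cont_tac := unfold q4, q3, q2, q1, zz, sg, cc;
  ccont_tac HZc Hgxc Hgyc Hgzc Hnz.

Lemma coord_S Psi u : (1 <= u <= m)%nat ->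
  (forall t, 0 <= t <= 2 * PI -> eqA (m+4) (emul m (m+4) Ups us (Z t) (Psi t)) (eone m)) ->
  lineint m (m+4) Ups us a b gx gy gz Psi u = escale (Cmult (RtoC (2 * PI)) Ci) (eone m) u.
Proof.
  intros Hu HPsi. rewrite lineint_PP by (auto; lia). emul_eval. rewrite !CIk_S by lia.
  unfold escale. rewrite eone_S by lia. rewrite Cmult_1_r.
  assert (Hw := Hwind u Hu). unfold winding0 in Hw. apply Cdiv_one in Hw; [|exact twoPIi_nz].
  rewrite <- Hw. eapply isCI_eq_of.
  - isCI_tac cont_tac.
  - intros t Ht. cbv beta. rewrite (Cderiv_cder _ _ _ (HZd t u)). unfold Dv. eone_eval m.
    field. apply Hnz; lia.
Qed.

Ltac fin_eq := cbv beta; unfold q4, q3, q2; rewrite ?q1_zero; unfold zz, sg, cc, Dv;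
  eone_eval m; rewrite ?HZ1, ?Ha1, ?Hb1.

Lemma coord_1 Psi :
  (forall t, 0 <= t <= 2 * PI -> eqA (m+4) (emul m (m+4) Ups us (Z t) (Psi t)) (eone m)) ->
  lineint m (m+4) Ups us a b gx gy gz Psi (m+1)%nat = escale (Cmult (RtoC (2 * PI)) Ci) (eone m) (m+1)%nat.
Proof.
  intros HPsi. rewrite lineint_PP by (auto; lia). emul_eval.
  rewrite ?CIk_1, ?CIk_2, ?CIk_3, ?CIk_4. rewrite !CIk_S by lia.
  unfold escale. rewrite eone_N by lia. rewrite Cmult_0_r.
  eapply (isCI_zero_of _ _ (fun t => Cdiv (Z t (m+1)%nat) (Z t (us (m+1)%nat)))).
  - isCI_tac cont_tac.
  - intros t Ht. eapply cder_val; [cder_tac HZd; try (apply Hnz; lia)|].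
    fin_eq. field. apply Hnz; lia.
  - intros t Ht. cont_tac.
  - cbv beta. rewrite !Hper. reflexivity.
Qed.

Ltac nz_tac := first [apply Hnz; lia | (let E := fresh in intro E; injection E; intros; lra)].

Lemma HZk k : (m < k)%nat -> a k = RtoC 0 -> b k = RtoC 0 -> forall t, Z t k = RtoC 0.
Proof. intros Hk Ha Hb t. rewrite HZ, eone_N, Ha, Hb by lia. ring. Qed.

Ltac coord_start HPsi :=
  rewrite lineint_PP by (auto; lia); emul_eval;
  rewrite ?CIk_1, ?CIk_2, ?CIk_3, ?CIk_4; rewrite !CIk_S by lia;
  unfold escale; rewrite eone_N by lia; rewrite Cmult_0_r.

Lemma coord_2 Psi :
  (forall t, 0 <= t <= 2 * PI -> eqA (m+4) (emul m (m+4) Ups us (Z t) (Psi t)) (eone m)) ->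
  lineint m (m+4) Ups us a b gx gy gz Psi (m+2)%nat = escale (Cmult (RtoC (2 * PI)) Ci) (eone m) (m+2)%nat.
Proof.
  intros HPsi. coord_start HPsi.
  eapply (isCI_zero_of _ _ (fun t => Cdiv (Z t (m+2)%nat) (Z t (us (m+2)%nat)))).
  - isCI_tac cont_tac.
  - intros t Ht. eapply cder_val; [cder_tac HZd; try (apply Hnz; lia)|].
    fin_eq. field. nz_tac.
  - intros t Ht. cont_tac.
  - cbv beta. rewrite !Hper. reflexivity.
Qed.

Lemma coord_3 Psi :
  (forall t, 0 <= t <= 2 * PI -> eqA (m+4) (emul m (m+4) Ups us (Z t) (Psi t)) (eone m)) ->
  lineint m (m+4) Ups us a b gx gy gz Psi (m+3)%nat = escale (Cmult (RtoC (2 * PI)) Ci) (eone m) (m+3)%nat.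
Proof.
  intros HPsi. coord_start HPsi.
  eapply (isCI_zero_of _ _ (fun t => Cminus (Cdiv (Z t (m+3)%nat) (Z t (us (m+3)%nat)))
     (Cmult (Cdiv (Ups (m+2)%nat (m+2)%nat (m+3)%nat) (RtoC 2))
        (Cmult (Cdiv (Z t (m+2)%nat) (Z t (us (m+2)%nat))) (Cdiv (Z t (m+2)%nat) (Z t (us (m+2)%nat))))))).
  - isCI_tac cont_tac.
  - intros t Ht. unfold Cminus. eapply cder_val; [cder_tac HZd; try (apply Hnz; lia)|].
    fin_eq. destruct Hcase as [[HA HB]|[HA HB]].
    + rewrite ?(HZk (m+2)%nat), ?HA, ?HB by (auto; lia). field. repeat split; nz_tac.
    + rewrite ?(HZk (m+3)%nat), ?HA, ?HB by (auto; lia).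
      destruct (Ceq0_dec (Ups (m+2)%nat (m+2)%nat (m+3)%nat)) as [Hc0|Hc].
      * rewrite Hc0. field. repeat split; nz_tac.
      * rewrite (Hrel 2 2 3) by (auto; lia). field. repeat split; nz_tac.
  - intros t Ht. unfold Cminus. cont_tac.
  - cbv beta. rewrite !Hper. reflexivity.
Qed.

Definition rat (t : R) i := Cdiv (Z t (m+i)%nat) (Z t (us (m+i)%nat)).

Lemma coord_4 Psi :
  (forall t, 0 <= t <= 2 * PI -> eqA (m+4) (emul m (m+4) Ups us (Z t) (Psi t)) (eone m)) ->
  lineint m (m+4) Ups us a b gx gy gz Psi (m+4)%nat = escale (Cmult (RtoC (2 * PI)) Ci) (eone m) (m+4)%nat.
Proof.
  intros HPsi. coord_start HPsi.
  eapply (isCI_zero_of _ _ (fun t =>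
    Cplus (Cplus (Cplus (Cdiv (Z t (m+4)%nat) (Z t (us (m+4)%nat)))
     (Copp (Cmult (Cdiv (Ups (m+2)%nat (m+2)%nat (m+4)%nat) (RtoC 2))
        (Cmult (Cdiv (Z t (m+2)%nat) (Z t (us (m+2)%nat))) (Cdiv (Z t (m+2)%nat) (Z t (us (m+2)%nat)))))))
     (Copp (Cmult (Cdiv (Ups (m+3)%nat (m+3)%nat (m+4)%nat) (RtoC 2))
        (Cmult (Cdiv (Z t (m+3)%nat) (Z t (us (m+3)%nat))) (Cdiv (Z t (m+3)%nat) (Z t (us (m+3)%nat)))))))
     (Cmult (Cdiv (Cmult (Ups (m+2)%nat (m+3)%nat (m+4)%nat) (Ups (m+2)%nat (m+2)%nat (m+3)%nat)) (RtoC 3))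
        (Cmult (Cmult (Cdiv (Z t (m+2)%nat) (Z t (us (m+2)%nat))) (Cdiv (Z t (m+2)%nat) (Z t (us (m+2)%nat))))
               (Cdiv (Z t (m+2)%nat) (Z t (us (m+2)%nat))))))).
  - isCI_tac cont_tac.
  - intros t Ht. eapply cder_val; [cder_tac HZd; try (apply Hnz; lia)|].
    fin_eq. destruct Hcase as [[HA HB]|[HA HB]].
    + rewrite ?(HZk (m+2)%nat), ?HA, ?HB by (auto; lia).
      destruct (Ceq0_dec (Ups (m+3)%nat (m+3)%nat (m+4)%nat)) as [Hc0|Hc].
      * rewrite Hc0. field. repeat split; nz_tac.
      * rewrite (Hrel 3 3 4) by (auto; lia). field. repeat split; nz_tac.
    + rewrite ?(HZk (m+3)%nat), ?HA, ?HB by (auto; lia).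
      destruct (Ceq0_dec (Ups (m+2)%nat (m+2)%nat (m+3)%nat)) as [Hc0|Hc];
        [rewrite Hc0 | rewrite (Hrel 2 2 3) by (auto; lia)];
      (destruct (Ceq0_dec (Ups (m+2)%nat (m+2)%nat (m+4)%nat)) as [Hc1|Hc1];
        [rewrite Hc1 | try rewrite (Hrel 2 2 4) by (auto; lia)]);
      (destruct (Ceq0_dec (Ups (m+2)%nat (m+3)%nat (m+4)%nat)) as [Hc2|Hc2];
        [rewrite Hc2 | try rewrite (Hrel 2 3 4) by (auto; lia)]);
      field; repeat split; nz_tac.
  - intros t Ht. cont_tac.
  - cbv beta. rewrite !Hper. reflexivity.
Qed.

Lemma core_main :
  (forall t, 0 <= t <= 2 * PI ->
     exists psi : Elt, eqA (m+4) (emul m (m+4) Ups us (Z t) psi) (eone m)) /\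
  (forall Psi : R -> Elt,
     (forall t, 0 <= t <= 2 * PI -> eqA (m+4) (emul m (m+4) Ups us (Z t) (Psi t)) (eone m)) ->
     eqA (m+4) (lineint m (m+4) Ups us a b gx gy gz Psi)
           (escale (Cmult (RtoC (2 * PI)) Ci) (eone m))).
Proof.
  split.
  - intros t Ht. exists (Pinv m Ups us (Z t)). apply inv_exists; auto.
  - intros Psi HPsi j Hj. destruct (le_lt_dec j m).
    + apply coord_S; auto; lia.
    + assert (Hj4 : (j = m+1 \/ j = m+2 \/ j = m+3 \/ j = m+4)%nat) by lia.
      destruct Hj4 as [Hj4|[Hj4|[Hj4|Hj4]]]; subst j.
      * apply coord_1; auto. * apply coord_2; auto. * apply coord_3; auto. * apply coord_4; auto.
Qed.

End Core.

Theorem theorem10 (m n : nat) (Ups : nat -> nat -> nat -> C) (us : nat -> nat)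
  (a b : Elt) :
  is_algebra_Anm m n Ups us ->
  (* dim_C N = n - m = 4 *)
  (n - m = 4)%nat ->
  (* e1, e2, e3 linearly independent over R *)
  (forall x y z : R, eqA n (zeta m a b x y z) (fun _ => RtoC 0) ->
     x = 0 /\ y = 0 /\ z = 0) ->
  (* standing assumption: f_u(E_3) = C for every u = 1..m *)
  (forall u, (1 <= u <= m)%nat ->
     forall w : C, exists x y z : R, zeta m a b x y z u = w) ->
  (* (1) and (2) *)
  a (m + 1)%nat = RtoC 0 -> b (m + 1)%nat = RtoC 0 ->
  ((a (m + 2)%nat = RtoC 0 /\ b (m + 2)%nat = RtoC 0) \/
   (a (m + 3)%nat = RtoC 0 /\ b (m + 3)%nat = RtoC 0)) ->
  (* every circle C as in the context *)
  forall (rad u1 u2 u3 v1 v2 v3 : R),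
  0 < rad -> orthonormal u1 u2 u3 v1 v2 v3 ->
  let gx := circ rad u1 v1 in
  let gy := circ rad u2 v2 in
  let gz := circ rad u3 v3 in
  let zt := fun t => zeta m a b (gx t) (gy t) (gz t) in
  (forall u, (1 <= u <= m)%nat ->
     (* f_u(C) is a closed Jordan curve ... *)
     (forall t1 t2, 0 <= t1 < 2 * PI -> 0 <= t2 < 2 * PI ->
        zt t1 u = zt t2 u -> t1 = t2) /\
     (* ... not passing through 0, positively oriented, with 0 in its interior *)
     (forall t, zt t u <> RtoC 0) /\
     winding0 (fun t => zt t u) = RtoC 1) ->
  (* zeta^{-1} exists along C, and  int_C zeta^{-1} dzeta = 2 pi i * 1 *)
  (forall t, 0 <= t <= 2 * PI ->
     exists psi : Elt, eqA n (emul m n Ups us (zt t) psi) (eone m)) /\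
  (forall Psi : R -> Elt,
     (forall t, 0 <= t <= 2 * PI -> eqA n (emul m n Ups us (zt t) (Psi t)) (eone m)) ->
     eqA n (lineint m n Ups us a b gx gy gz Psi)
           (escale (Cmult (RtoC (2 * PI)) Ci) (eone m))).
Proof.
  intros Halg Hnm Hind Hstd Ha1 Hb1 Hcase rad u1 u2 u3 v1 v2 v3 Hrad Horth gx gy gz zt Hcurve.
  destruct Halg as [Hm [Hmn [Hus [Hcomm Hassoc]]]].
  assert (En : n = (m + 4)%nat) by lia. subst n.
  assert (Hus' : forall i, (1 <= i <= 4)%nat -> (1 <= us (m+i) <= m)%nat) by (intros; apply Hus; lia).
  apply core_main with (gxd := fun t => rad * (- sin t * u1 + cos t * v1))
                       (gyd := fun t => rad * (- sin t * u2 + cos t * v2))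
                       (gzd := fun t => rad * (- sin t * u3 + cos t * v3)).
  - exact Hm.
  - apply Hus'; lia.
  - apply Hus'; lia.
  - apply Hus'; lia.
  - apply Hus'; lia.
  - exact (assoc_rel m Ups us Hm Hus' Hassoc).
  - intros t. unfold gx, circ. auto_derive; auto. ring.
  - intros t. unfold gy, circ. auto_derive; auto. ring.
  - intros t. unfold gz, circ. auto_derive; auto. ring.
  - intros t. apply (ex_derive_continuous (K:=R_AbsRing) (V:=R_NormedModule)). auto_derive; auto.
  - intros t. apply (ex_derive_continuous (K:=R_AbsRing) (V:=R_NormedModule)). auto_derive; auto.
  - intros t. apply (ex_derive_continuous (K:=R_AbsRing) (V:=R_NormedModule)). auto_derive; auto.
  - intros t k. reflexivity.
  - intros k. unfold zt, gx, gy, gz, circ. rewrite cos_2PI, sin_2PI, cos_0, sin_0. reflexivity.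
  - intros t u Hu. destruct (Hcurve u Hu) as [_ [H _]]. apply H.
  - exact Ha1.
  - exact Hb1.
  - exact Hcase.
  - intros u Hu. destruct (Hcurve u Hu) as [_ [_ H]]. exact H.
Qed.
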